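(* Assume: (i) for every $t$ the local noises $w^1_t,\ldots,w^n_t$ are i.i.d.; (ii) there are $K_T,K_c>0$ with $|T(s',s,m)-T(s',s,m')|\le K_T\|m-m'\|_\infty$ and $c(m,\hat m,a)\le K_c\|m-\hat m\|_\infty$ for all $s',s\in\mathcal{S}$, $a\in\{0,1\}$, $m,m',\hat m\in\mathcal{P}(\mathcal{S})$; (iii) $\gamma K_p<1$, where $K_p>0$ is a constant with $\|\bar T(p)-\bar T(\hat p)\|_\infty\le K_p\|p-\hat p\|_\infty$ for all $p,\hat p\in\mathcal{P}(\mathcal{S})$. Consider the estimator that never collects data: $\hat m_1=m_1$ and $\hat m_t=\bar T\circ\cdots\circ\bar T(\hat m_1)$ ($t-1$ compositions) for $t\ge2$. Then the total expected discounted cost of this estimator is bounded and converges to zero at rate $1/\sqrt n$: $$\mathbb{E}\Big[\sum_{t=1}^\infty\gamma^{t-1}c(m_t,\hat m_t,0)\Big]\le\frac{\gamma K_c}{(1-\gamma)(1-\gamma K_p)}\,\mathcal{O}\Big(\frac1{\sqrt n}\Big),$$ where the $\mathcal{O}(1/\sqrt n)$ term depends on the variance of the local noises.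
   Context: $n$ nodes with states $s^i_t$ in a finite set $\mathcal{S}\subset\mathbb{R}$, time $t\in\mathbb{N}$. Empirical distribution $m_t(s)=\frac1n\sum_{i=1}^n\mathbb{1}\{s^i_t=s\}$. Dynamics $s^i_{t+1}=f(s^i_t,m_t,w^i_t)$ with local noise $w^i_t$ in a finite set $\mathcal{W}$ with common distribution $P_W$; $f$ is defined for $m\in\mathcal{P}(\mathcal{S})$ (probability vectors on $\mathcal{S}$). $T(s',s,m)=\sum_{w\in\mathcal{W}}P_W(w)\mathbb{1}\{s'=f(s,m,w)\}$. Define $\bar T:\mathcal{P}(\mathcal{S})\to\mathcal{P}(\mathcal{S})$ by $\bar T(p)=\sum_{s\in\mathcal{S}}p(s)T(\cdot,s,p)$. Cost $c:\mathcal{P}(\mathcal{S})^2\times\{0,1\}\to\mathbb{R}_{\ge0}$; discount $\gamma\in(0,1)$. Initial states and noises are mutually independent with finite variances. *)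

(* Defs.v *)
From HB Require Import structures.
From mathcomp Require Import all_boot all_order all_algebra.
From mathcomp Require Import all_classical all_reals all_analysis.
Set Implicit Arguments.
Unset Strict Implicit.
Unset Printing Implicit Defensive.
Import Order.TTheory GRing.Theory Num.Theory.
Import numFieldNormedType.Exports.
Local Open Scope classical_set_scope.
Local Open Scope ring_scope.

Definition is_prob {R : realType} {S : finType} (p : S -> R) : Prop :=
  (forall s, 0 <= p s) /\ \sum_(s : S) p s = 1.

Definition normInf {R : realType} {S : finType} (p : S -> R) : R :=
  \big[Num.max/0]_(s : S) `|p s|.

Definition kernelT {R : realType} {S W : finType} (PW : W -> R)
  (f : S -> (S -> R) -> W -> S) (s' s : S) (m : S -> R) : R :=
  \sum_(w : W) PW w * (s' == f s m w)%:R.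

Definition Tbar {R : realType} {S W : finType} (PW : W -> R)
  (f : S -> (S -> R) -> W -> S) (p : S -> R) : S -> R :=
  fun s' => \sum_(s : S) p s * kernelT PW f s' s p.

Definition empirical {R : realType} {S : finType} (n : nat) (x : 'I_n -> S)
  : S -> R :=
  fun s => (#|[set i | x i == s]|)%:R / n%:R.

Definition discrete_rv {d} {Ω : measurableType d} {V : finType}
  (X : Ω -> V) : Prop :=
  forall v : V, measurable (X @^-1` [set v]).

Definition mutually_independent {R : realType} {d} {Ω : measurableType d}
  (P : probability Ω R) {S W : finType} (n : nat)
  (s1 : 'I_n -> Ω -> S) (w : nat -> 'I_n -> Ω -> W) : Prop :=
  forall (A : {set 'I_n}) (B : seq (nat * 'I_n)), uniq B ->
  forall (a : 'I_n -> S) (b : nat -> 'I_n -> W),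
    P [set ω | (forall i, i \in A -> s1 i ω = a i) /\
               (forall tj, tj \in B -> w tj.1 tj.2 ω = b tj.1 tj.2)]
    = ((\prod_(i in A) fine (P [set ω | s1 i ω = a i])) *
       (\prod_(tj <- B) fine (P [set ω | w tj.1 tj.2 ω = b tj.1 tj.2])))%:E.

(* the state process, with time shifted by one: state 0 = s_1 (paper time 1),
   state (t+1) i = f (state t i) (m_t) (w t i), w t = paper w_{t+1} *)
Fixpoint state {R : realType} {S W : finType} (f : S -> (S -> R) -> W -> S)
  {Ω : Type} (n : nat) (s1 : 'I_n -> Ω -> S) (w : nat -> 'I_n -> Ω -> W)
  (t : nat) (ω : Ω) : 'I_n -> S :=
  match t with
  | 0 => fun i => s1 i ω
  | t'.+1 => fun i => f (state f s1 w t' ω i)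
                         (empirical (state f s1 w t' ω)) (w t' i ω)
  end.

(* the no-data estimator: mhat_1 = m_1, mhat_{t} = Tbar^(t-1)(mhat_1);
   index shifted: mhat t = Tbar^t (m_1) *)
Definition mhat {R : realType} {S W : finType} (PW : W -> R)
  (f : S -> (S -> R) -> W -> S) {Ω : Type} (n : nat)
  (s1 : 'I_n -> Ω -> S) (t : nat) (ω : Ω) : S -> R :=
  iter t (Tbar PW f) (empirical (fun i => s1 i ω)).

(* E[ sum_{t>=1} gamma^(t-1) c(m_t, mhat_t, 0) ]  (action 0 = false) *)
Definition expected_cost {R : realType} {d} {Ω : measurableType d}
  (P : probability Ω R) {S W : finType} (PW : W -> R)
  (f : S -> (S -> R) -> W -> S) (c : (S -> R) -> (S -> R) -> bool -> R)
  (γ : R) (n : nat) (s1 : 'I_n -> Ω -> S) (w : nat -> 'I_n -> Ω -> W)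
  : \bar R :=
  (\int[P]_ω (\sum_(0 <= t <oo)
      ((γ ^+ t * c (empirical (state f s1 w t ω)) (mhat PW f s1 t ω) false)%:E)))%E.

(* Main.v *)
Require Import Defs.
From HB Require Import structures.
From mathcomp Require Import all_boot all_order all_algebra.
From mathcomp Require Import all_classical all_reals all_analysis.
From mathcomp Require Import measurable_realfun ring lra.
Import Order.TTheory GRing.Theory Num.Theory.
Import numFieldNormedType.Exports.
Local Open Scope classical_set_scope.
Local Open Scope ring_scope.

Section Discrete.
Context {R : realType} {d : measure_display} {Ω : measurableType d}
  (P : probability Ω R).

Lemma disc_pre (V : finType) (X : Ω -> V) (B : set V) :
  discrete_rv X -> measurable (X @^-1` B).
Proof.
move=> dX.
have -> : X @^-1` B = \bigcup_(v in B) X @^-1` [set v].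
  apply/seteqP; split => [om /= Bx|om [v Bv /= ->]//].
  by exists (X om).
by apply: fin_bigcup_measurable; [exact: finite_finset| move=> v _; exact: dX].
Qed.

Lemma disc_mfun (V : finType) (X : Ω -> V) (g : V -> R) :
  discrete_rv X -> measurable_fun setT (fun om => (g (X om))%:E).
Proof.
move=> dX _ Y _; rewrite setTI.
exact: (@disc_pre V X ((fun v => (g v)%:E) @^-1` Y) dX).
Qed.

Lemma disc_integral (V : finType) (X : Ω -> V) (g : V -> R) :
  discrete_rv X -> (forall v, 0 <= g v) ->
  (\int[P]_om (g (X om))%:E =
    (\sum_(v : V) g v * fine (P (X @^-1` [set v])))%:E)%E.
Proof.
move=> dX g0.
have E : (fun om => (g (X om))%:E) =
   (fun om => \sum_(v : V) ((g v)%:E * (\1_(X @^-1` [set v]) om : R)%:E))%E.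
  apply/funext => om; rewrite (bigD1 (X om)) //= big1 ?adde0.
    by rewrite indicE mem_set //= mule1.
  move=> v /negPf vX; rewrite indicE memNset ?mule0 //= => e.
  by move: vX; rewrite e eqxx.
rewrite E ge0_integral_sum //; last 2 first.
- move=> v; apply: measurable_funeM; apply/measurable_EFinP.
  exact/measurable_indic/dX.
- by move=> v om ?; rewrite indicE; apply: mule_ge0; rewrite lee_fin ?ler0n.
rewrite -sumEFin; apply: eq_bigr => v _.
have i0 : forall om, [set: Ω] om -> (0 <= (\1_(X @^-1` [set v]) om : R)%:E)%E.
  by move=> om ?; rewrite indicE lee_fin ler0n.
have im : measurable_fun [set: Ω] (fun om => (\1_(X @^-1` [set v]) om : R)%:E).
  by apply/(measurable_EFinP _ (\1_(X @^-1` [set v]))); exact: measurable_indic (dX v).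
rewrite (@ge0_integralZl_EFin _ _ _ P setT measurableT _ i0 im (g v) (g0 v)).
rewrite integral_indic ?setIT; last exact: dX.
by rewrite EFinM fineK ?fin_num_measure //; exact: dX.
exact: measurableT.
Qed.

Lemma disc_sum1 (V : finType) (X : Ω -> V) :
  discrete_rv X -> \sum_(v : V) fine (P (X @^-1` [set v])) = 1.
Proof.
move=> dX; have := @disc_integral V X (fun _ => 1) dX (fun _ => ler01).
have -> : (fun om : Ω => ((fun _ : V => 1 : R) (X om))%:E) = cst 1%E by [].
rewrite integral_cst // mul1e => H.
apply: EFin_inj; rewrite (_ : \sum_v _ = \sum_v 1 * fine (P (X @^-1` [set v]))); last first.
  by apply: eq_bigr => v _; rewrite mul1r.
rewrite -H; exact: probability_setT.
Qed.

Lemma disc_pmf_ge0 (V : finType) (X : Ω -> V) v : 0 <= fine (P (X @^-1` [set v])).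
Proof. by apply: fine_ge0. Qed.

End Discrete.

Section Fin.
Context {R : realType} {S W : finType}.

Lemma normInf_ge0 (p : S -> R) : 0 <= normInf p.
Proof.
rewrite /normInf; elim/big_ind: _ => [//|x y hx hy|s _].
  by rewrite le_max hx.
exact: normr_ge0.
Qed.

Lemma normInf_le (p : S -> R) c : 0 <= c -> (forall s, `|p s| <= c) -> normInf p <= c.
Proof. by move=> c0 h; apply: bigmax_le. Qed.

Lemma normInf_ge (p : S -> R) s : `|p s| <= normInf p.
Proof. exact: le_bigmax. Qed.

Lemma normInf_sub3 (p q r : S -> R) :
  normInf (p - r) <= normInf (p - q) + normInf (q - r).
Proof.
apply: normInf_le; first by rewrite addr_ge0 // normInf_ge0.
move=> s; have -> : (p - r) s = (p - q) s + (q - r) s.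
  by rewrite /= addrA subrK.
apply: le_trans (ler_normD _ _) _.
by apply: lerD; apply: normInf_ge.
Qed.

Lemma normInf_sum (p : S -> R) : normInf p <= \sum_s `|p s|.
Proof.
apply: normInf_le; first by apply: sumr_ge0 => s _.
move=> s; rewrite (bigD1 s) //= lerDl; exact: sumr_ge0.
Qed.

Lemma normInf0 (p : S -> R) : (forall s, p s = 0) -> normInf p = 0.
Proof.
move=> h; apply/eqP; rewrite eq_le normInf_ge0 andbT.
by apply: normInf_le => // s; rewrite h normr0.
Qed.

Lemma card_eqE n (x : 'I_n -> S) s :
  (#|[set i | x i == s]|%:R : R) = \sum_i (x i == s)%:R.
Proof.
rewrite -sum1_card natr_sum big_mkcond /=; apply: eq_bigr => i _.
have E : (i \in [set i0 | x i0 == s]) = (x i == s).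
  by apply/idP/idP => [/set_mem //|h]; apply/mem_set.
by rewrite E; case: (x i == s).
Qed.

Lemma emp_sum n (x : 'I_n -> S) (F : S -> R) :
  \sum_s #|[set i | x i == s]|%:R * F s = \sum_i F (x i).
Proof.
under eq_bigr do rewrite card_eqE mulr_suml.
rewrite exchange_big /=; apply: eq_bigr => i _.
rewrite (bigD1 (x i)) //= eqxx mul1r big1 ?addr0 // => s /negPf.
by rewrite eq_sym => ->; rewrite mul0r.
Qed.

Lemma empirical_prob n (x : 'I_n -> S) : (0 < n)%N -> is_prob (empirical x : S -> R).
Proof.
move=> n0; split => [s|]; first by rewrite /empirical divr_ge0.
rewrite /empirical -mulr_suml.
have E := @emp_sum n x (fun _ => 1).
rewrite (eq_bigr (fun s => #|[set i | x i == s]|%:R * 1)); last by move=> s _; rewrite mulr1.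
rewrite E.
rewrite sumr_const card_ord -[_ *+ n]mulr_natl mulr1 divff //.
by rewrite pnatr_eq0 -lt0n.
Qed.

Context (PW : W -> R) (f : S -> (S -> R) -> W -> S).
Hypothesis PWp : is_prob PW.

Lemma kernelT_ge0 s' s m : 0 <= kernelT PW f s' s m.
Proof. by apply: sumr_ge0 => u _; rewrite mulr_ge0 // PWp.1. Qed.

Lemma kernelT_le1 s' s m : kernelT PW f s' s m <= 1.
Proof.
rewrite -PWp.2; apply: ler_sum => u _.
by rewrite ler_piMr ?PWp.1 //; case: (_ == _).
Qed.

Lemma kernelT_sum s m : \sum_s' kernelT PW f s' s m = 1.
Proof.
rewrite /kernelT exchange_big /= -[X in _ = X]PWp.2; apply: eq_bigr => u _.
rewrite -mulr_sumr -[X in _ = X]mulr1; congr (_ * _).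
rewrite (bigD1 (f s m u)) //= eqxx big1 ?addr0 // => s' /negPf ->.
by [].
Qed.

Lemma Tbar_prob p : is_prob p -> is_prob (Tbar PW f p).
Proof.
move=> [p0 p1]; split => [s'|].
  by apply: sumr_ge0 => s _; rewrite mulr_ge0 // kernelT_ge0.
rewrite /Tbar exchange_big /= -p1; apply: eq_bigr => s _.
by rewrite -mulr_sumr kernelT_sum mulr1.
Qed.

Lemma iter_Tbar_prob t p : is_prob p -> is_prob (iter t (Tbar PW f) p).
Proof. by move=> pp; elim: t => //= t IH; exact: Tbar_prob. Qed.

Section Var.
Variable n : nat.

Lemma Ev_prod (F : 'I_n -> W -> R) :
  \sum_(v : {ffun 'I_n -> W}) \prod_k (PW (v k) * F k (v k)) =
  \prod_k \sum_u PW u * F k u.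
Proof. by rewrite bigA_distr_bigA. Qed.

Lemma Ev1 : \sum_(v : {ffun 'I_n -> W}) \prod_k PW (v k) = 1.
Proof.
transitivity (\sum_(v : {ffun 'I_n -> W}) \prod_k (PW (v k) * (fun _ _ => 1) k (v k))).
  by apply: eq_bigr => v _; apply: eq_bigr => k _; rewrite mulr1.
rewrite (Ev_prod (fun _ _ => 1)); apply: big1 => k _.
by rewrite (eq_bigr PW) ?PWp.2 // => u _; rewrite mulr1.
Qed.

Lemma prodPW_ge0 (v : {ffun 'I_n -> W}) : 0 <= \prod_k PW (v k).
Proof. by apply: prodr_ge0 => k _; exact: PWp.1. Qed.

Lemma Ev_le1 (g : {ffun 'I_n -> W} -> R) : (forall v, g v <= 1) ->
  \sum_(v : {ffun 'I_n -> W}) (\prod_k PW (v k)) * g v <= 1.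
Proof.
move=> h; rewrite -[X in _ <= X]Ev1; apply: ler_sum => v _.
by rewrite -[X in _ <= X]mulr1 ler_wpM2l ?prodPW_ge0.
Qed.

Lemma Ev_cross i j (a b : W -> R) : i != j -> \sum_u PW u * a u = 0 ->
  \sum_(v : {ffun 'I_n -> W}) (\prod_k PW (v k)) * (a (v i) * b (v j)) = 0.
Proof.
move=> ij a0.
pose F k u := if k == i then a u else if k == j then b u else 1.
transitivity (\sum_(v : {ffun 'I_n -> W}) \prod_k (PW (v k) * F k (v k))).
  apply: eq_bigr => v _; rewrite big_split /=; congr (_ * _).
  rewrite (bigD1 i) //= (bigD1 j) 1?eq_sym //= big1 ?mulr1.
    have ji : (j == i) = false by rewrite eq_sym (negPf ij).
    by rewrite /F eqxx ji eqxx.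
  by move=> k /andP[ki kj]; rewrite /F (negPf ki) (negPf kj).
rewrite Ev_prod (bigD1 i) //= /F eqxx.
by rewrite (eq_bigr (fun u => PW u * a u)) ?a0 ?mul0r // => u _; rewrite eqxx.
Qed.

Lemma var_gen (a : 'I_n -> W -> R) :
  (forall i, \sum_u PW u * a i u = 0) -> (forall i u, a i u ^+ 2 <= 1) ->
  \sum_(v : {ffun 'I_n -> W}) (\prod_k PW (v k)) * (\sum_i a i (v i)) ^+ 2 <= n%:R.
Proof.
move=> a0 a1.
rewrite (_ : \sum_(v : {ffun 'I_n -> W}) _ = \sum_i \sum_j \sum_(v : {ffun 'I_n -> W})
    (\prod_k PW (v k)) * (a i (v i) * a j (v j))); last first.
  have step v : \prod_k PW (v k) * (\sum_i a i (v i)) ^+ 2 =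
      \sum_i \sum_j \prod_k PW (v k) * (a i (v i) * a j (v j)).
    rewrite expr2 mulr_suml mulr_sumr; apply: eq_bigr => i _.
    by rewrite mulr_sumr mulr_sumr.
  under eq_bigr do rewrite step.
  by rewrite exchange_big; apply: eq_bigr => i _; rewrite exchange_big.
rewrite (_ : n%:R = \sum_(i < n) (1:R)); last by rewrite sumr_const card_ord.
apply: ler_sum => i _.
rewrite (bigD1 i) //= [X in _ + X]big1 ?addr0; last first.
  by move=> j ji; apply: (Ev_cross i j (a i) (a j)); [rewrite eq_sym|exact: a0].
by apply: Ev_le1 => v; rewrite -expr2.
Qed.

End Var.
End Fin.

Lemma absz_le {R : realType} (z a : R) : 0 < a -> `|z| <= (a * z ^+ 2 + a^-1) / 2.
Proof.
move=> a0.
have h : 0 <= (a * `|z| - 1) ^+ 2 by apply: sqr_ge0.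
rewrite -(real_normK (num_real z)).
rewrite -subr_ge0.
have -> : (a * `|z| ^+ 2 + a^-1) / 2 - `|z| = a^-1 * (a * `|z| - 1) ^+ 2 / 2.
  by field; rewrite gt_eqF.
by apply: divr_ge0 => //; apply: mulr_ge0 => //; rewrite invr_ge0 ltW.
Qed.

Section VarApp.
Context {R : realType} {S W : finType} (PW : W -> R) (f : S -> (S -> R) -> W -> S).
Hypothesis PWp : is_prob PW.
Variable n : nat.
Hypothesis n0 : (0 < n)%N.

Definition aT (x : 'I_n -> S) (m : S -> R) s' i u :=
  (s' == f (x i) m u)%:R - kernelT PW f s' (x i) m.

Definition Zx (x : 'I_n -> S) (v : {ffun 'I_n -> W}) s' :=
  empirical (fun i => f (x i) (empirical x) (v i)) s' - Tbar PW f (empirical x) s'.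

Lemma emp_avg (x : 'I_n -> S) (F : S -> R) :
  \sum_s empirical x s * F s = n%:R^-1 * \sum_i F (x i).
Proof.
rewrite -emp_sum mulr_sumr; apply: eq_bigr => s _; rewrite /empirical.
by rewrite mulrA [_^-1 * _]mulrC.
Qed.

Lemma Zx_eq x (v : {ffun 'I_n -> W}) s' : Zx x v s' = n%:R^-1 * \sum_i aT x (empirical x) s' i (v i).
Proof.
rewrite /Zx /Tbar emp_avg {1}/empirical card_eqE mulrC -mulrBr -sumrB.
congr (_ * _); apply: eq_bigr => i _; by rewrite /aT eq_sym.
Qed.

Lemma aT_mean x m s' i : \sum_u PW u * aT x m s' i u = 0.
Proof.
rewrite /aT /kernelT.
under eq_bigr do rewrite mulrBr.
by rewrite sumrB -mulr_suml PWp.2 mul1r subrr.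
Qed.

Lemma aT_sq x m s' i u : aT x m s' i u ^+ 2 <= 1.
Proof.
have k0 := kernelT_ge0 PW f PWp s' (x i) m.
have k1 := kernelT_le1 PW f PWp s' (x i) m.
rewrite /aT; case: (_ == _); rewrite /= ?mulr1n ?mulr0n; nra.
Qed.

Lemma var_Zx x s' :
  \sum_(v : {ffun 'I_n -> W}) (\prod_k PW (v k)) * Zx x v s' ^+ 2 <= n%:R^-1.
Proof.
under eq_bigr do rewrite Zx_eq exprMn mulrCA.
rewrite -mulr_sumr.
have := var_gen PW PWp n _ (aT_mean x (empirical x) s') (aT_sq x (empirical x) s').
move=> /(ler_wpM2l (sqr_ge0 (n%:R^-1 : R))) /le_trans; apply.
have nz : (n%:R : R) != 0 by rewrite pnatr_eq0 -lt0n.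
by rewrite expr2 -mulrA mulVf // mulr1.
Qed.

Definition Gx (x : 'I_n -> S) (v : {ffun 'I_n -> W}) : R :=
  \sum_s' (Num.sqrt n%:R * Zx x v s' ^+ 2 + (Num.sqrt n%:R)^-1) / 2.

Lemma sqn_gt0 : 0 < Num.sqrt (n%:R : R).
Proof. by rewrite sqrtr_gt0 ltr0n. Qed.

Lemma Y_le_G x (v : {ffun 'I_n -> W}) :
  normInf (empirical (fun i => f (x i) (empirical x) (v i)) - Tbar PW f (empirical x))
    <= Gx x v.
Proof.
apply: le_trans (normInf_sum _) _; apply: ler_sum => s' _.
exact: absz_le sqn_gt0.
Qed.

Lemma Gx_ge0 x (v : {ffun 'I_n -> W}) : 0 <= Gx x v.
Proof.
apply: sumr_ge0 => s' _; apply: divr_ge0 => //; apply: addr_ge0.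
  by apply: mulr_ge0; [exact: ltW sqn_gt0|exact: sqr_ge0].
by rewrite invr_ge0 ltW // sqn_gt0.
Qed.

Lemma EG x : \sum_(v : {ffun 'I_n -> W}) (\prod_k PW (v k)) * Gx x v
   <= #|S|%:R / Num.sqrt n%:R.
Proof.
set sq := Num.sqrt (n%:R : R).
have sq0 : 0 < sq := sqn_gt0.
rewrite /Gx; under eq_bigr do rewrite mulr_sumr.
rewrite exchange_big /=.
rewrite mulr_natl -sumr_const; apply: ler_sum => s' _.
have -> : \sum_(v : {ffun 'I_n -> W}) \prod_k PW (v k) * ((sq * Zx x v s' ^+ 2 + sq^-1) / 2)
  = (sq * \sum_(v : {ffun 'I_n -> W}) (\prod_k PW (v k) * Zx x v s' ^+ 2)
     + sq^-1 * \sum_(v : {ffun 'I_n -> W}) \prod_k PW (v k)) / 2.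
  rewrite !mulr_sumr -big_split /= mulr_suml; apply: eq_bigr => v _.
  rewrite mulrA; congr (_ * _); rewrite mulrDr [X in X + _]mulrCA; congr (_ + _); exact: mulrC.
rewrite (Ev1 PW PWp n) mulr1.
have nE : (n%:R : R) = sq ^+ 2 by rewrite sqr_sqrtr // ler0n.
have := var_Zx x s'; rewrite nE => hv.
have : sq * \sum_(v : {ffun 'I_n -> W}) (\prod_k PW (v k) * Zx x v s' ^+ 2)
   <= sq * (sq ^+ 2)^-1 by rewrite ler_wpM2l // ltW.
have -> : sq * (sq ^+ 2)^-1 = sq^-1 by field; rewrite gt_eqF.
move=> h.
have -> : sq^-1 = (sq^-1 + sq^-1) / 2 by field; rewrite gt_eqF.
lra.
Qed.

End VarApp.

Section Hist.
Context {R : realType} {S W : finType} (PW : W -> R) (f : S -> (S -> R) -> W -> S).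
Variable w0 : W.
Variable n : nat.
Context {d : measure_display} {Ω : measurableType d} (P : probability Ω R)
  (s1 : 'I_n -> Ω -> S) (w : nat -> 'I_n -> Ω -> W).
Hypothesis ds1 : forall i, discrete_rv (s1 i).
Hypothesis dw : forall t i, discrete_rv (w t i).
Hypothesis ind : mutually_independent P s1 w.
Hypothesis lawW : forall t i v, P [set om | w t i om = v] = (PW v)%:E.

Definition Hty t := ({ffun 'I_n -> S} * {ffun 'I_t * 'I_n -> W})%type.
Definition hist t (om : Ω) : Hty t :=
  ([ffun i => s1 i om], [ffun ki : 'I_t * 'I_n => w ki.1 ki.2 om]).
Definition wvec t om : {ffun 'I_n -> W} := [ffun i => w t i om].
Definition pairZ t om : Hty t * {ffun 'I_n -> W} := (hist t om, wvec t om).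

Definition bh t (h : Hty t) (k : nat) (i : 'I_n) : W :=
  if insub k is Some k' then h.2 (k', i) else w0.
Arguments bh {t} h k i.
Definition bhv t (h : Hty t) (v : {ffun 'I_n -> W}) k i :=
  if k == t then v i else bh h k i.
Arguments bhv {t} h v k i.
Definition BL t := [seq (k, i) | k <- iota 0 t, i <- index_enum 'I_n].
Definition WL (t : nat) : seq (nat * 'I_n) := [seq (t, i) | i <- index_enum 'I_n].

Definition stV t (h : Hty t) t' : 'I_n -> S :=
  state f (fun i (_ : unit) => h.1 i) (fun k i (_ : unit) => bh h k i) t' tt.
Arguments stV {t} h t'.

Lemma bh_lt t (h : Hty t) k i (kt : (k < t)%N) : bh h k i = h.2 (Ordinal kt, i).
Proof.
rewrite /bh; case: insubP => [k' _ kv|]; last by rewrite kt.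
by congr (h.2 (_, i)); apply: val_inj.
Qed.

Lemma mem_BL t k i : ((k, i) \in BL t) = (k < t)%N.
Proof.
apply/allpairsP/idP => [[[k' i'] [/= h1 _ [-> _]]]|kt].
  by rewrite mem_iota in h1.
by exists (k, i); rewrite /= mem_iota mem_index_enum kt.
Qed.

Lemma mem_BLWL t k i : ((k, i) \in BL t ++ WL t) = (k <= t)%N.
Proof.
rewrite mem_cat mem_BL.
have -> : ((k, i) \in WL t) = (k == t).
  apply/mapP/eqP => [[j _ [-> _]] //|->]; by exists i; rewrite ?mem_index_enum.
by rewrite [in RHS]leq_eqVlt orbC.
Qed.

Lemma uniq_BL t : uniq (BL t).
Proof.
apply: allpairs_uniq; [exact: iota_uniq|exact: index_enum_uniq|].
by move=> [a b] [c e] _ _ /= [-> ->].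
Qed.

Lemma uniq_BLWL t : uniq (BL t ++ WL t).
Proof.
rewrite cat_uniq uniq_BL /=; apply/andP; split.
  by apply/hasPn => tj /mapP [i _ ->]; rewrite mem_BL ltnn.
by rewrite map_inj_uniq ?index_enum_uniq // => i j [].
Qed.

Lemma ev_meas (A : {set 'I_n}) (B : seq (nat * 'I_n)) (a : 'I_n -> S) (b : nat -> 'I_n -> W) :
  measurable [set om | (forall i, i \in A -> s1 i om = a i) /\
                       (forall tj, tj \in B -> w tj.1 tj.2 om = b tj.1 tj.2)].
Proof.
have -> : [set om | (forall i, i \in A -> s1 i om = a i) /\
                       (forall tj, tj \in B -> w tj.1 tj.2 om = b tj.1 tj.2)] =
  (\bigcap_(i in [set i | i \in A]) s1 i @^-1` [set a i]) `&`
  (\bigcap_(tj in [set` B]) w tj.1 tj.2 @^-1` [set b tj.1 tj.2]).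
  by apply/seteqP; split => om /= [H1 H2]; split.
apply: measurableI; apply: fin_bigcap_measurable.
- exact: finite_finset.
- by move=> i _; exact: ds1.
- exact: finite_seq.
- by move=> tj _; exact: dw.
Qed.

Lemma hist_pre t (h : Hty t) : hist t @^-1` [set h] =
  [set om | (forall i, i \in [set: 'I_n]%SET -> s1 i om = h.1 i) /\
            (forall tj, tj \in BL t -> w tj.1 tj.2 om = bh h tj.1 tj.2)].
Proof.
apply/seteqP; split => om /=.
  move=> <-; split => [i _|[k i]]; first by rewrite ffunE.
  rewrite mem_BL => kt; by rewrite (bh_lt _ _ _ _ kt) ffunE.
move=> [H1 H2]; case: h H1 H2 => h1 h2 H1 H2 /=; congr (_, _).
  by apply/ffunP => i; rewrite ffunE H1 // finset.in_setT.
apply/ffunP => -[k i]; rewrite ffunE /=.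
have := H2 (val k, i); rewrite mem_BL ltn_ord => /(_ isT) ->.
by rewrite (bh_lt _ _ _ _ (ltn_ord k)) /=; congr (h2 (_, i)); apply: val_inj.
Qed.

Lemma pairZ_pre t (h : Hty t) v : pairZ t @^-1` [set (h, v)] =
  [set om | (forall i, i \in [set: 'I_n]%SET -> s1 i om = h.1 i) /\
            (forall tj, tj \in BL t ++ WL t -> w tj.1 tj.2 om = bhv h v tj.1 tj.2)].
Proof.
apply/seteqP; split => om /=.
  move=> [<- <-]; split => [i _|[k i]]; first by rewrite ffunE.
  rewrite mem_BLWL leq_eqVlt => /orP[/eqP ->|kt]; rewrite /bhv.
    by rewrite eqxx ffunE.
  by rewrite (ltn_eqF kt) (bh_lt _ _ _ _ kt) ffunE.
move=> [H1 H2]; case: h H1 H2 => h1 h2 H1 H2 /=; rewrite /pairZ; congr (_, _).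
  congr (_, _); first by apply/ffunP => i; rewrite ffunE H1 // finset.in_setT.
  apply/ffunP => -[k i]; rewrite ffunE /=.
  have := H2 (val k, i); rewrite mem_BLWL ltnW ?ltn_ord // => /(_ isT) ->.
  rewrite /bhv (ltn_eqF (ltn_ord k)).
  by rewrite (bh_lt _ _ _ _ (ltn_ord k)) /=; congr (h2 (_, i)); apply: val_inj.
apply/ffunP => i; rewrite ffunE.
have := H2 (t, i); rewrite mem_BLWL leqnn => /(_ isT) ->.
by rewrite /bhv eqxx.
Qed.

Lemma hist_disc t : discrete_rv (hist t).
Proof. by move=> h; rewrite hist_pre; exact: ev_meas. Qed.

Lemma pairZ_disc t : discrete_rv (pairZ t).
Proof. by move=> [h v]; rewrite pairZ_pre; exact: ev_meas. Qed.

Lemma pmf_pair t h v : fine (P (pairZ t @^-1` [set (h, v)])) =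
  fine (P (hist t @^-1` [set h])) * \prod_i PW (v i).
Proof.
rewrite pairZ_pre hist_pre !ind ?uniq_BLWL ?uniq_BL //= big_cat /= mulrA.
congr (_ * _ * _).
  rewrite big_seq [RHS]big_seq; apply: eq_bigr => -[k i].
  by rewrite mem_BL => kt /=; rewrite /bhv (ltn_eqF kt).
rewrite big_map; apply: eq_bigr => i _ /=.
by rewrite /bhv eqxx lawW.
Qed.

Lemma state_hist t t' om : (t' <= t)%N ->
  state f s1 w t' om = stV (hist t om) t'.
Proof.
elim: t' => [|t' IH] le.
  by apply/funext => i; rewrite /stV /= ffunE.
rewrite /= IH ?(ltnW le) //; apply/funext => i.
by rewrite /stV /= (bh_lt _ _ _ _ le) /= ffunE.
Qed.

Lemma s1_hist t om : (fun i => s1 i om) = (fun i => (hist t om).1 i).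
Proof. by apply/funext => i; rewrite ffunE. Qed.

End Hist.

Section Main.
Context {R : realType} {S W : finType} (PW : W -> R) (f : S -> (S -> R) -> W -> S)
  (c : (S -> R) -> (S -> R) -> bool -> R) (γ K_c K_p : R).
Hypothesis PWp : is_prob PW.
Hypothesis c0 : forall m mh a, is_prob m -> is_prob mh -> 0 <= c m mh a.
Hypothesis γ0 : 0 < γ.
Hypothesis γ1 : γ < 1.
Hypothesis Kc0 : 0 < K_c.
Hypothesis Kp0 : 0 < K_p.
Hypothesis Hc : forall m mh a, is_prob m -> is_prob mh ->
     c m mh a <= K_c * normInf (m - mh).
Hypothesis HTb : forall p ph, is_prob p -> is_prob ph ->
     normInf (Tbar PW f p - Tbar PW f ph) <= K_p * normInf (p - ph).
Hypothesis γKp : γ * K_p < 1.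
Variable w0 : W.
Variable n : nat.
Hypothesis n0 : (0 < n)%N.
Context {d : measure_display} {Ω : measurableType d} (P : probability Ω R)
  (s1 : 'I_n -> Ω -> S) (w : nat -> 'I_n -> Ω -> W).
Hypothesis ds1 : forall i, discrete_rv (s1 i).
Hypothesis dw : forall t i, discrete_rv (w t i).
Hypothesis ind : mutually_independent P s1 w.
Hypothesis lawW : forall t i v, P [set om | w t i om = v] = (PW v)%:E.

Definition mt t om : S -> R := empirical (state f s1 w t om).
Definition mh t om := mhat PW f s1 t om.
Definition Xt t om := normInf (mt t om - mh t om).
Definition Yt t om := normInf (mt t.+1 om - Tbar PW f (mt t om)).
Definition Gp t (p : Hty n t * {ffun 'I_n -> W}) := Gx PW f n (stV f w0 n t p.1 t) p.2.
Definition ct t om := c (mt t om) (mh t om) false.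
Definition κ := K_c * γ / (1 - γ * K_p).
Definition B := (#|S|%:R / Num.sqrt (n%:R : R)).

Lemma κ_ge0 : 0 <= κ.
Proof.
by rewrite /κ divr_ge0 // ?mulr_ge0 ?ltW // subr_gt0.
Qed.

Lemma B_ge0 : 0 <= B.
Proof. by rewrite /B divr_ge0 // sqrtr_ge0. Qed.

Lemma mt_prob t om : is_prob (mt t om).
Proof. exact: empirical_prob. Qed.

Lemma mh_prob t om : is_prob (mh t om).
Proof. by rewrite /mh /mhat; apply: iter_Tbar_prob => //; exact: empirical_prob. Qed.

Lemma X0 om : Xt 0 om = 0.
Proof. by apply: normInf0 => s; rewrite /Xt /mt /mh /mhat /= subrr. Qed.

Lemma X_ge0 t om : 0 <= Xt t om.
Proof. exact: normInf_ge0. Qed.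

Lemma Xrec t om : Xt t.+1 om <= Yt t om + K_p * Xt t om.
Proof.
rewrite /Xt /Yt.
have -> : mh t.+1 om = Tbar PW f (mh t om) by [].
apply: le_trans (normInf_sub3 _ (Tbar PW f (mt t om)) _) _.
apply: lerD => //; exact: HTb (mt_prob _ _) (mh_prob _ _).
Qed.

Lemma ct_le t om : ct t om <= K_c * Xt t om.
Proof. exact: Hc (mt_prob _ _) (mh_prob _ _). Qed.

Lemma ct_ge0 t om : 0 <= ct t om.
Proof. exact: c0 (mt_prob _ _) (mh_prob _ _). Qed.

Lemma Y_le t om : Yt t om <= Gp t (pairZ n s1 w t om).
Proof.
rewrite /Yt /Gp /=.
set x := stV f w0 n t (hist n s1 w t om) t.
have E : state f s1 w t.+1 om = (fun i => f (x i) (empirical x) (wvec n w t om i)).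
  rewrite /= (state_hist f w0 n s1 w t t om (leqnn t)); apply/funext => i.
  by rewrite ffunE.
rewrite /mt E (state_hist f w0 n s1 w t t om (leqnn t)) -/x.
exact: Y_le_G.
Qed.

Lemma partial N om : \sum_(0 <= t < N) γ ^+ t * ct t om <=
  κ * \sum_(0 <= t < N) γ ^+ t * Yt t om.
Proof.
pose SX M := \sum_(0 <= t < M) γ ^+ t * Xt t om.
set SY := \sum_(0 <= t < N) γ ^+ t * Yt t om.
have h1 : SX N.+1 <= γ * SY + γ * K_p * SX N.
  rewrite /SX big_nat_recl // X0 mulr0 add0r.
  apply: (@le_trans _ _ (\sum_(0 <= t < N)
     (γ * (γ ^+ t * Yt t om) + γ * K_p * (γ ^+ t * Xt t om)))).
    apply: ler_sum => t _; rewrite exprS.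
    have g0 : 0 <= γ ^+ t by rewrite exprn_ge0 // ltW.
    have h := ler_wpM2l (mulr_ge0 (ltW γ0) g0) (Xrec t om).
    nra.
  by rewrite big_split /= -!mulr_sumr.
have h2 : SX N <= SX N.+1.
  rewrite /SX big_nat_recr //= lerDl; apply: mulr_ge0; last exact: X_ge0.
  by rewrite exprn_ge0 // ltW.
have SY0 : 0 <= SY.
  apply: sumr_ge0 => t _; apply: mulr_ge0; first by rewrite exprn_ge0 // ltW.
  exact: normInf_ge0.
have h3 : (1 - γ * K_p) * SX N <= γ * SY by lra.
apply: (@le_trans _ _ (K_c * SX N)).
  rewrite /SX mulr_sumr; apply: ler_sum => t _.
  rewrite mulrCA; apply: ler_wpM2l; first by rewrite exprn_ge0 // ltW.
  exact: ct_le.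
have pos : 0 < 1 - γ * K_p by rewrite subr_gt0.
have h4 : SX N <= γ * SY / (1 - γ * K_p) by rewrite ler_pdivlMr // mulrC.
have -> : κ * SY = K_c * (γ * SY / (1 - γ * K_p)).
  by rewrite /κ; field; rewrite gt_eqF.
by apply: ler_wpM2l => //; exact: ltW.
Qed.

Lemma Gterm_ge0 t p : 0 <= κ * γ ^+ t * Gp t p.
Proof.
apply: mulr_ge0; last exact: Gx_ge0.
by apply: mulr_ge0; [exact: κ_ge0|rewrite exprn_ge0 // ltW].
Qed.

Lemma series_le om :
  (\sum_(0 <= t <oo) ((γ ^+ t * ct t om)%:E) <=
   \sum_(0 <= t <oo) ((κ * γ ^+ t * Gp t (pairZ n s1 w t om))%:E))%E.
Proof.
have g0 t : 0 <= γ ^+ t by rewrite exprn_ge0 // ltW.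
apply: lee_lim.
- apply: is_cvg_nneseries => t _ _; rewrite lee_fin mulr_ge0 //; exact: ct_ge0.
- by apply: is_cvg_nneseries => t _ _; rewrite lee_fin Gterm_ge0.
- apply: nearW => N; rewrite !sumEFin lee_fin.
  apply: le_trans (partial N om) _.
  rewrite mulr_sumr; apply: ler_sum => t _; rewrite -mulrA.
  apply: ler_wpM2l; first exact: κ_ge0.
  apply: ler_wpM2l => //; exact: Y_le.
Qed.

Lemma term_mfun_c t : measurable_fun setT (fun om => (γ ^+ t * ct t om)%:E).
Proof.
pose g := fun h : Hty n t => γ ^+ t * c (empirical (stV f w0 n t h t))
       (iter t (Tbar PW f) (empirical (fun i => h.1 i))) false.
have -> : (fun om => (γ ^+ t * ct t om)%:E) = (fun om => (g (hist n s1 w t om))%:E).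
  apply/funext => om /=.
  rewrite /g /ct /mt /mh /mhat (state_hist f w0 n s1 w t t om (leqnn t)).
  congr (_ %:E); congr (_ * c _ _ _); congr (iter _ _ (empirical _)).
  by apply/funext => i /=; rewrite ffunE.
exact: (disc_mfun _ _ g (hist_disc w0 n s1 w ds1 dw t)).
Qed.

Lemma term_mfun_G t :
  measurable_fun setT (fun om => (κ * γ ^+ t * Gp t (pairZ n s1 w t om))%:E).
Proof.
exact: (disc_mfun _ _ (fun p => κ * γ ^+ t * Gp t p) (pairZ_disc w0 n s1 w ds1 dw t)).
Qed.

Lemma E_G t :
  (\int[P]_om ((κ * γ ^+ t * Gp t (pairZ n s1 w t om))%:E) <= (κ * γ ^+ t * B)%:E)%E.
Proof.
have k0 : 0 <= κ * γ ^+ t by rewrite mulr_ge0 ?κ_ge0 // exprn_ge0 // ltW.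
rewrite (disc_integral P _ (pairZ n s1 w t) (fun p => κ * γ ^+ t * Gp t p)
   (pairZ_disc w0 n s1 w ds1 dw t)); last first.
  by move=> p; exact: Gterm_ge0.
rewrite lee_fin.
under eq_bigr do rewrite -mulrA.
rewrite -mulr_sumr; apply: ler_wpM2l => //.
rewrite (eq_bigr (fun p => Gp t (p.1, p.2) *
    fine (P (pairZ n s1 w t @^-1` [set (p.1, p.2)])))); last by case.
rewrite -(pair_bigA _ (fun h v => Gp t (h, v) *
    fine (P (pairZ n s1 w t @^-1` [set (h, v)])))) /=.
apply: (@le_trans _ _ (\sum_h fine (P (hist n s1 w t @^-1` [set h])) * B)).
  apply: ler_sum => h _.
  under eq_bigr do rewrite (pmf_pair PW w0 n P s1 w ind lawW) mulrCA.
  rewrite -mulr_sumr; apply: ler_wpM2l; first exact: fine_ge0.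
  rewrite /Gp /=.
  under eq_bigr do rewrite mulrC.
  exact: EG.
by rewrite -mulr_suml (disc_sum1 P _ (hist n s1 w t) (hist_disc w0 n s1 w ds1 dw t)) mul1r.
Qed.

Lemma geom N : \sum_(0 <= t < N) γ ^+ t <= (1 - γ)^-1.
Proof.
have E : (1 - γ) * \sum_(0 <= t < N) γ ^+ t = 1 - γ ^+ N.
  elim: N => [|N IH]; first by rewrite big_nil mulr0 expr0 subrr.
  by rewrite big_nat_recr //= mulrDr IH exprS; ring.
have pos : 0 < 1 - γ by rewrite subr_gt0.
rewrite -(ler_pM2l pos) E mulfV ?gt_eqF //.
have := exprn_ge0 N (ltW γ0); lra.
Qed.

Lemma series_geom :
  (\sum_(0 <= t <oo) ((κ * γ ^+ t * B)%:E) <= (κ * B / (1 - γ))%:E)%E.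
Proof.
have g0 t : 0 <= γ ^+ t by rewrite exprn_ge0 // ltW.
apply: lime_le.
  apply: is_cvg_nneseries => t _ _; rewrite lee_fin; apply: mulr_ge0; last exact: B_ge0.
  by apply: mulr_ge0; [exact: κ_ge0|exact: g0].
apply: nearW => N; rewrite sumEFin lee_fin.
rewrite (eq_bigr (fun t => κ * B * γ ^+ t)); last first.
  by move=> t _; rewrite mulrAC.
rewrite -mulr_sumr; apply: ler_wpM2l; first by rewrite mulr_ge0 ?κ_ge0 ?B_ge0.
exact: geom.
Qed.

Lemma main_bound :
  (expected_cost P PW f c γ s1 w <= (κ * B / (1 - γ))%:E)%E.
Proof.
have g0 t : 0 <= γ ^+ t by rewrite exprn_ge0 // ltW.
rewrite /expected_cost.
apply: (@le_trans _ _ (\int[P]_om \sum_(0 <= t <oo)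
   ((κ * γ ^+ t * Gp t (pairZ n s1 w t om))%:E))%E).
  apply: ge0_le_integral => //.
  - move=> om _; apply: nneseries_ge0 => t _ _.
    by rewrite lee_fin mulr_ge0 //; exact: ct_ge0.
  - apply: (ge0_emeasurable_sum (P := xpredT)).
      by move=> t om _ _; rewrite lee_fin mulr_ge0 //; exact: ct_ge0.
    by move=> t _; exact: term_mfun_c.
  - apply: (ge0_emeasurable_sum (P := xpredT)).
      by move=> t om _ _; rewrite lee_fin Gterm_ge0.
    by move=> t _; exact: term_mfun_G.
  - by move=> om _; exact: series_le.
rewrite integral_nneseries //; last 2 first.
- by move=> t; exact: term_mfun_G.
- by move=> t om _; rewrite lee_fin Gterm_ge0.
apply: le_trans series_geom.
apply: lee_nneseries.
  move=> t _ _; apply: integral_ge0 => om _.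
  by rewrite lee_fin Gterm_ge0.
by move=> t _; exact: E_G.
Qed.

End Main.

Theorem theorem6 (R : realType) (S W : finType) (PW : W -> R)
  (f : S -> (S -> R) -> W -> S) (c : (S -> R) -> (S -> R) -> bool -> R)
  (γ K_T K_c K_p : R) :
  is_prob PW ->
  (forall m mh a, is_prob m -> is_prob mh -> 0 <= c m mh a) ->
  0 < γ < 1 ->
  0 < K_T -> 0 < K_c -> 0 < K_p ->
  (forall s' s m m', is_prob m -> is_prob m' ->
     `|kernelT PW f s' s m - kernelT PW f s' s m'| <= K_T * normInf (m - m')) ->
  (forall m mh a, is_prob m -> is_prob mh ->
     c m mh a <= K_c * normInf (m - mh)) ->
  (forall p ph, is_prob p -> is_prob ph ->
     normInf (Tbar PW f p - Tbar PW f ph) <= K_p * normInf (p - ph)) ->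
  γ * K_p < 1 ->
  exists C : R,
  forall (n : nat), (0 < n)%N ->
  forall (d : measure_display) (Ω : measurableType d) (P : probability Ω R)
    (s1 : 'I_n -> Ω -> S) (w : nat -> 'I_n -> Ω -> W),
    (forall i, discrete_rv (s1 i)) ->
    (forall t i, discrete_rv (w t i)) ->
    mutually_independent P s1 w ->
    (forall t i v, P [set ω | w t i ω = v] = (PW v)%:E) ->
    (expected_cost P PW f c γ s1 w <=
      ((γ * K_c / ((1 - γ) * (1 - γ * K_p))) * (C / Num.sqrt n%:R))%:E)%E.
Proof.
move=> PWp c0 /andP[γ0 γ1] KT0 Kc0 Kp0 HT Hc HTb γKp.
have [w0 _] : exists w0 : W, true.
  case: (pickP (xpredT : pred W)) => [w0 _|h]; first by exists w0.
  exfalso; have := PWp.2; rewrite big1 => [/eqP|u _].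
    by rewrite eq_sym oner_eq0.
  by have := h u.
exists #|S|%:R.
move=> n n0 d Ω P s1 w ds1 dw ind lawW.
have H := main_bound PW f c γ K_c K_p PWp c0 γ0 γ1 Kc0 Hc HTb γKp w0 n n0 P s1 w ds1 dw ind lawW.
apply: (le_trans H).
rewrite lee_fin /κ /B le_eqVlt; apply/orP; left; apply/eqP.
have sq0 : 0 < Num.sqrt (n%:R : R) by rewrite sqrtr_gt0 ltr0n.
field.
by rewrite !gt_eqF // ?subr_gt0.
Qed.
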